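(* Let $\mathcal{G}=(G,\Pi,T,s_0)$ be a game and let $t\in\mathbb{Q}\cap[0,1]$ be a threshold. If there is a collective strategy $\bar\sigma_\Pi$ such that for every strategy $\sigma_{\mathsf O}$ of the opponent the set $T$ is reached from $s_0$ with probability strictly greater than $t$, then there is a memoryless collective strategy with the same property.
   Context: A game structure is $G=(\Sigma,S,(A_p)_{p\in\Sigma},(\mathsf{Av}_p)_{p\in\Sigma},\delta)$ with a set $\Sigma$ of players, a finite set $S$ of states, finite action sets $A_p$, nonempty sets $\mathsf{Av}_p(s)\subseteq A_p$ of actions available to $p$ at $s$, and a transition function $\delta$ mapping each state $s$ and each action profile $(a_p)_{p\in\Sigma}$ with $a_p\in\mathsf{Av}_p(s)$ to a probability distribution $\delta(s,(a_p)_p)$ on $S$. A game is $\mathcal G=(G,\Pi,T,s_0)$ with a team $\Pi\subseteq\Sigma$, target set $T\subseteq S$ assumed absorbing (every action profile at $t\in T$ leads to $t$ with probability 1), and initial state $s_0$. Throughout, $\Sigma\setminus\Pi=\{\mathsf O\}$ is a single player, the opponent. A history is a nonempty finite word over $S$, a play an infinite one. A strategy for player $p$ maps each history $hs$ (last state $s$) to a probability distribution over $\mathsf{Av}_p(s)$; it is memoryless if its value depends only on the last state. A collective strategy is a tuple $\bar\sigma_\Pi=(\sigma_p)_{p\in\Pi}$ of strategies, one per team player; the team players randomise independently, i.e. at history $h$ the joint action $(a_p)_{p\in\Pi}$ is chosen with probability $\prod_{p\in\Pi}\sigma_p(h)(a_p)$. A complete profile $\bar\sigma$ induces a probability measure on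 plays starting at $s_0$ where from history $hs$ the next state is $s'$ with probability $\sum_{\bar a}\bar\sigma(hs)(\bar a)\,\delta(s,\bar a)(s')$, $\bar a$ ranging over available action profiles and $\bar\sigma(hs)(\bar a)=\prod_{p\in\Sigma}\sigma_p(hs)(a_p)$. A collective strategy is memoryless if each component is. *)

(* Defs.v *)
From HB Require Import structures.
From mathcomp Require Import all_boot all_order all_algebra.
From mathcomp Require Import classical_sets reals.
Set Implicit Arguments. Unset Strict Implicit. Unset Printing Implicit Defensive.
Import Order.TTheory GRing.Theory Num.Theory.
Local Open Scope ring_scope.

(* Players: Sigma = option Pi; [Some q] are the team players (Pi),
   [None] is the single opponent O.  A p is the finite action set of p. *)
Definition profile (Pi : finType) (A : option Pi -> finType) :=
  {dffun forall p : option Pi, A p}.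

(* Game structure.  [delta s a] is the distribution delta(s, a) on S;
   its values are only relevant for available action profiles a. *)
Record gstruct (R : realType) (Pi S : finType) (A : option Pi -> finType) := GStruct {
  Av : forall p : option Pi, S -> {set A p};
  delta : S -> @profile Pi A -> S -> R }.

Section Games.
Variables (R : realType) (Pi S : finType) (A : option Pi -> finType).
Variable G : @gstruct R Pi S A.

Definition is_dist (X : finType) (d : X -> R) :=
  (forall x, 0 <= d x) /\ \sum_x d x = 1.

Definition avail (s : S) (a : @profile Pi A) : bool :=
  [forall p, a p \in Av G p s].

Definition wf_gstruct : Prop :=
  (forall p s, Av G p s != finset.set0) /\
  (forall s a, avail s a -> is_dist (delta G s a)).

Definition absorbing (T : {set S}) : Prop :=
  forall t, t \in T -> forall a, avail t a -> delta G t a t = 1.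

(* A strategy maps a history  h ++ [:: s]  (given as (h, s), s the last
   state) to a probability distribution over A p supported by Av p s. *)
Definition strat (p : option Pi) := seq S -> S -> A p -> R.

Definition valid_strat (p : option Pi) (sg : strat p) : Prop :=
  forall h s, is_dist (sg h s) /\ (forall x, x \notin Av G p s -> sg h s x = 0).

Definition memoryless (p : option Pi) (sg : strat p) : Prop :=
  forall h h' s, sg h s = sg h' s.

Definition full_profile := forall p : option Pi, strat p.

Definition join (sT : forall q : Pi, strat (Some q)) (sO : strat None)
  : full_profile :=
  fun p => match p return strat p with Some q => sT q | None => sO end.

Definition step (sg : full_profile) (h : seq S) (s s' : S) : R :=
  \sum_(a | avail s a) (\prod_p sg p h s (a p)) * delta G s a s'.

Variable T : {set S}.

Fixpoint reachn (sg : full_profile) (n : nat) (h : seq S) (s : S) : R :=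
  if s \in T then 1 else
  match n with
  | 0 => 0
  | n'.+1 => \sum_s' step sg h s s' * reachn sg n' (rcons h s) s'
  end.

(* probability of the event "T is eventually reached" from s0: the
   (countable, increasing) union of the events "reached within n steps" *)
Definition reach_prob (sg : full_profile) (s0 : S) : R :=
  sup (range (fun n => reachn sg n [::] s0)).

End Games.

(* Main.v *)
Require Import Defs.
From HB Require Import structures.
From mathcomp Require Import all_boot all_order all_algebra.
From mathcomp Require Import classical_sets reals boolp.
From mathcomp Require Import lra.
Set Implicit Arguments. Unset Strict Implicit. Unset Printing Implicit Defensive.
Import Order.TTheory GRing.Theory Num.Theory.
Local Open Scope ring_scope.

Lemma argmin_ex (R : realType) (X : finType) (P : {pred X}) (F : X -> R) :
  (exists b0, b0 \in P) -> exists2 b, b \in P & forall b', b' \in P -> F b <= F b'.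
Proof.
case=> b0 Pb0.
case: (@arg_minP _ R X b0 P F Pb0) => b Pb Hb.
by exists b.
Qed.

Lemma bernoulli (R : realType) (r : R) (k : nat) : -1 <= r -> 1 + k%:R * r <= (1 + r) ^+ k.
Proof.
move=> hr; elim: k => [|k IH]; first by rewrite mul0r addr0 expr0.
rewrite exprSr -natr1.
have h1 : 0 <= 1 + r by lra.
have h2 : (1 + k%:R * r) * (1 + r) <= (1 + r) ^+ k * (1 + r) by rewrite ler_wpM2r.
have h3 : 0 <= k%:R * r * r by rewrite -mulrA mulr_ge0 // ?ler0n // -expr2 sqr_ge0.
nra.
Qed.

Lemma geom_small (R : realType) (q c : R) : 0 <= q < 1 -> 0 < c -> exists k : nat, q ^+ k < c.
Proof.
case/andP=> q0 q1 c0.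
have [->|qn0] := eqVneq q 0; first by exists 1%N; rewrite expr1.
have qp : 0 < q by rewrite lt_neqAle eq_sym qn0.
pose r := q^-1 - 1.
have rp : 0 < r by rewrite /r subr_gt0 invf_gt1.
have rc : 0 <= (r * c)^-1 by rewrite invr_ge0 mulr_ge0 // ltW.
have := archi_boundP rc; set k := Num.bound _ => hk.
exists k.
have hb := bernoulli k (ltW (lt_le_trans (ltrN10 R) (ltW rp))).
have e1 : 1 + r = q^-1 by rewrite /r addrC subrK.
rewrite e1 exprVn in hb.
have qk : 0 < q ^+ k by rewrite exprn_gt0.
have : q ^+ k * (1 + k%:R * r) <= 1.
  apply: le_trans (ler_wpM2l (ltW qk) hb) _.
  by rewrite mulfV // lt0r_neq0.
have : 1 < k%:R * r * c.
  have rcp : 0 < r * c by rewrite mulr_gt0.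
  have e : (r * c) * (r * c)^-1 = 1 by rewrite mulfV // lt0r_neq0.
  rewrite -mulrA. nra.
nra.
Qed.
Lemma prod_option (R : comPzRingType) (I : finType) (F : option I -> R) :
  \prod_(p : option I) F p = F None * \prod_(q : I) F (Some q).
Proof.
rewrite (bigD1 None) //=; congr (_ * _).
rewrite (reindex_omap Some id) //=; last by case.
by apply: eq_bigl => j; rewrite eqxx.
Qed.

Lemma sum_prod_dffun (R : comPzRingType) (I : finType) (T_ : I -> finType)
   (P : forall i, {pred T_ i}) (F : forall i, T_ i -> R) :
 \sum_(a : {dffun forall i, T_ i} | [forall i, a i \in P i]) \prod_i F i (a i)
   = \prod_i \sum_(x in P i) F i x.
Proof.
have E1 : forall i, \sum_(x in P i) F i x =
   \sum_(j : {i : I & T_ i} | (tag j == i) && (tagged j \in P (tag j))) F (tag j) (tagged j).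
  move=> i.
  rewrite -(sig_big_dep (fun k => k == i) (fun k x => x \in P k) (fun k x => F k x)) /=.
  by rewrite big_pred1_eq.
rewrite (eq_bigr _ (fun i _ => E1 i)).
rewrite bigA_distr_big_dep /=.
pose h (a : {dffun forall i, T_ i}) := [ffun i => Tagged T_ (a i)].
have hinj : injective h.
  move=> a b /ffunP hab; apply/ffunP => i; move: (hab i); rewrite !ffunE.
  exact: eq_from_Tagged.
transitivity (\sum_(a in [set a : {dffun forall i, T_ i} | [forall i, a i \in P i]])
   \prod_i (fun i (j : {i : I & T_ i}) => F (tag j) (tagged j)) i (h a i)).
  apply: eq_big => [a|a _]; first by rewrite inE.
  by apply: eq_bigr => i _; rewrite ffunE.
rewrite -(big_imset (fun f : {ffun I -> {i : I & T_ i}} =>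
   \prod_i (fun i (j : {i : I & T_ i}) => F (tag j) (tagged j)) i (f i)) (in2W hinj)) /=.
apply: eq_bigl => f.
apply/imsetP/familyP => [[a] |].
  rewrite inE => /forallP Pa -> i; rewrite ffunE unfold_in /= eqxx /=; exact: Pa.
move=> Qf.
have tf : [forall i, tag (f i) == i].
  by apply/forallP => i; have /andP[] := Qf i.
pose a := dffun_of_fprod (FProd tf).
have fa : f = h a.
  apply/ffunP => i; rewrite !ffunE /=.
  by rewrite /fun_of_fprod etaggedK.
exists a => //.
rewrite inE; apply/forallP => i.
have := Qf i. rewrite fa ffunE /=. by case/andP.
Qed.

Section Main.
Variables (R : realType) (Pi S : finType) (A : option Pi -> finType).
Variable G : gstruct R S A.
Variable T : {set S}.
Hypothesis wfG : wf_gstruct G.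

Definition ldist p s (d : A p -> R) :=
  is_dist d /\ (forall x, x \notin Av G p s -> d x = 0).

Definition tprof := forall q : Pi, A (Some q) -> R.
Definition tvalid s (x : tprof) := forall q, ldist s (x q).

Definition LS (x : tprof) (y : A None -> R) (s s' : S) : R :=
  \sum_(a | avail G s a) (y (a None) * \prod_q x q (a (Some q))) * delta G s a s'.

Definition dirac (b : A None) : A None -> R := fun c => (c == b)%:R.

Lemma step_LS (sT : forall q : Pi, strat R S A (Some q)) (sO : strat R S A None) h s s' :
  step G (join sT sO) h s s' = LS (fun q => sT q h s) (sO h s) s s'.
Proof. by apply: eq_bigr => a _; rewrite prod_option. Qed.

Lemma LS_lin x y s s' : LS x y s s' = \sum_b y b * LS x (dirac b) s s'.
Proof.
rewrite /LS; under [RHS]eq_bigr do rewrite big_distrr.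
rewrite exchange_big /=; apply: eq_bigr => a _.
rewrite [RHS](bigD1 (a None)) //= [X in _ = _ + X]big1 => [|b nb].
  by rewrite /dirac eqxx mul1r addr0 !mulrA.
by rewrite /dirac eq_sym (negbTE nb) mul0r mul0r mulr0.
Qed.

Lemma delta_ge0 s a s' : avail G s a -> 0 <= delta G s a s'.
Proof. by move=> av; case: (wfG.2 s a av) => h _; exact: h. Qed.

Lemma LS_ge0 x y s s' : (forall q c, 0 <= x q c) -> (forall c, 0 <= y c) ->
  0 <= LS x y s s'.
Proof.
move=> hx hy; apply: sumr_ge0 => a av.
by rewrite mulr_ge0 ?delta_ge0 // mulr_ge0 // prodr_ge0.
Qed.

Lemma sum_ldist p s (d : A p -> R) : ldist s d -> \sum_(c in Av G p s) d c = 1.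
Proof.
case=> [[d0 d1] dz]; rewrite -d1 [RHS](bigID (mem (Av G p s))) /=.
by rewrite [X in _ = _ + X]big1 ?addr0 // => c /dz.
Qed.

Lemma LS_sum x y s : tvalid s x -> ldist s y -> \sum_s' LS x y s s' = 1.
Proof.
move=> hx hy; rewrite /LS exchange_big /=.
under eq_bigr => a av do rewrite -big_distrr /= (wfG.2 s a av).2 mulr1.
pose d : forall p, A p -> R := fun p => match p return A p -> R with
   None => y | Some q => x q end.
transitivity (\sum_(a : profile A | [forall p, a p \in Av G p s]) \prod_p d p (a p)).
  by apply: eq_bigr => a _; rewrite prod_option.
rewrite sum_prod_dffun; apply: big1 => p _.
by case: p => [q|] /=; apply: sum_ldist.
Qed.


Definition good (sg : full_profile R S A) := forall h s,
  (forall s', 0 <= step G sg h s s') /\ \sum_s' step G sg h s s' = 1.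

Lemma valid_good sT sO : (forall q, valid_strat G (sT q)) -> valid_strat G sO ->
  good (join sT sO).
Proof.
move=> hT hO h s; split => [s'|]; rewrite ?step_LS.
  apply: LS_ge0 => [q c|c]; first by case: (hT q h s) => [[]].
  by case: (hO h s) => [[]].
under eq_bigr do rewrite step_LS.
by apply: LS_sum => [q|]; [exact: (hT q h s) | exact: (hO h s)].
Qed.

Section Reach.
Variable sg : full_profile R S A.
Hypothesis hg : good sg.

Lemma reachnS n h s : reachn G T sg n.+1 h s =
  if s \in T then 1 else \sum_s' step G sg h s s' * reachn G T sg n (rcons h s) s'.
Proof. by []. Qed.

Lemma reachn0 h s : reachn G T sg 0 h s = (s \in T)%:R.
Proof. by rewrite /=; case: (s \in T). Qed.

Lemma reachn_ge0 n h s : 0 <= reachn G T sg n h s.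
Proof.
elim: n h s => [|n IH] h s; first by rewrite reachn0 ler0n.
rewrite reachnS; case: (s \in T) => //.
by apply: sumr_ge0 => s' _; rewrite mulr_ge0 //; case: (hg h s) => + _; apply.
Qed.

Lemma sum_step_le (h : seq S) s (f : S -> R) c : (forall s', f s' <= c) ->
  \sum_s' step G sg h s s' * f s' <= c.
Proof.
move=> hf; apply: le_trans (_ : \sum_s' step G sg h s s' * c <= c).
  by apply: ler_sum => s' _; rewrite ler_wpM2l //; case: (hg h s) => + _; apply.
by rewrite -big_distrl /= (hg h s).2 mul1r.
Qed.

Lemma reachn_le1 n h s : reachn G T sg n h s <= 1.
Proof.
elim: n h s => [|n IH] h s; first by rewrite reachn0; case: (s \in T).
rewrite reachnS; case: (s \in T) => //.
exact: sum_step_le.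
Qed.

Lemma reachn_mono n h s : reachn G T sg n h s <= reachn G T sg n.+1 h s.
Proof.
elim: n h s => [|n IH] h s.
  rewrite reachnS reachn0; case: (s \in T) => //.
  by apply: sumr_ge0 => s' _; rewrite mulr_ge0 ?reachn_ge0 //; case: (hg h s) => + _; apply.
rewrite reachnS [X in _ <= X]reachnS; case: (s \in T) => //.
by apply: ler_sum => s' _; rewrite ler_wpM2l //; case: (hg h s) => + _; apply.
Qed.

Lemma has_sup_reach s0 : has_sup (range (fun n => reachn G T sg n [::] s0)).
Proof.
split; first by exists (reachn G T sg 0 [::] s0); exists 0%N.
by exists 1 => _ [n _ <-]; exact: reachn_le1.
Qed.

Lemma reachn_le_rp n s0 : reachn G T sg n [::] s0 <= reach_prob G T sg s0.
Proof. by apply: ub_le_sup; [case: (has_sup_reach s0) | exists n]. Qed.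

Lemma rp_le s0 c : (forall n, reachn G T sg n [::] s0 <= c) -> reach_prob G T sg s0 <= c.
Proof.
move=> hc; apply: ge_sup; first by case: (has_sup_reach s0).
by move=> _ [n _ <-].
Qed.

End Reach.

Definition E (x : tprof) (y : A None -> R) s (w : S -> R) :=
  \sum_s' LS x y s s' * w s'.

Lemma E_lin x y s w : E x y s w = \sum_b y b * E x (dirac b) s w.
Proof.
rewrite /E; under eq_bigr do rewrite LS_lin big_distrl /=.
rewrite exchange_big /=; apply: eq_bigr => b _.
by rewrite big_distrr /=; apply: eq_bigr => s' _; rewrite mulrA.
Qed.

Lemma dirac_ldist s b : b \in Av G None s -> ldist s (dirac b).
Proof.
move=> hb; split; first split.
- by move=> c; rewrite /dirac ler0n.
- rewrite (bigD1 b) //= big1 ?addr0 /dirac ?eqxx // => c /negbTE -> //.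
- by move=> c hc; rewrite /dirac; case: eqP => // e; rewrite e hb in hc.
Qed.

Lemma tvalid_ge0 s x q c : tvalid s x -> 0 <= x q c.
Proof. by move=> hx; case: (hx q) => [[+ _] _]; apply. Qed.

Lemma ldist_ge0 p s (y : A p -> R) c : ldist s y -> 0 <= y c.
Proof. by case=> [[+ _] _]; apply. Qed.

Lemma LS_ge0' x y s s' : tvalid s x -> ldist s y -> 0 <= LS x y s s'.
Proof.
move=> hx hy; apply: LS_ge0 => [q c|c]; [exact: tvalid_ge0 | exact: ldist_ge0 hy].
Qed.

Lemma E_shift x y s w c : tvalid s x -> ldist s y ->
  E x y s (fun s' => w s' - c) = E x y s w - c.
Proof.
move=> hx hy; rewrite /E; under eq_bigr do rewrite mulrBr.
by rewrite sumrB -big_distrl /= LS_sum // mul1r.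
Qed.

Lemma E_mono x y s w w' : tvalid s x -> ldist s y -> (forall s', w s' <= w' s') ->
  E x y s w <= E x y s w'.
Proof.
move=> hx hy hw; apply: ler_sum => s' _; rewrite ler_wpM2l //; exact: LS_ge0'.
Qed.

Lemma E_le x y s w c : tvalid s x -> ldist s y -> (forall s', w s' <= c) ->
  E x y s w <= c.
Proof.
move=> hx hy hw; apply: le_trans (E_mono (w' := fun=> c) hx hy hw) _.
by rewrite /E -big_distrl /= LS_sum // mul1r.
Qed.

Lemma E_ge x y s w c : tvalid s x -> ldist s y -> (forall s', c <= w s') ->
  c <= E x y s w.
Proof.
move=> hx hy hw; apply: le_trans (E_mono (w := fun=> c) hx hy hw).
by rewrite /E -big_distrl /= LS_sum // mul1r.
Qed.

Lemma E_ge_min x y s w m : ldist s y ->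
  (forall b, b \in Av G None s -> m <= E x (dirac b) s w) -> m <= E x y s w.
Proof.
move=> hy hm; rewrite E_lin.
apply: le_trans (_ : m <= \sum_b y b * m) _.
  by rewrite -big_distrl /= (hy.1).2 mul1r.
apply: ler_sum => b _; case: (boolP (b \in Av G None s)) => hb.
  by rewrite ler_wpM2l ?hm //; exact: ldist_ge0 hy.
by rewrite (hy.2 b hb) !mul0r.
Qed.

Lemma exists_av p s : exists b, b \in Av G p s.
Proof. by apply/set0Pn; exact: wfG.1. Qed.

Lemma dirac_strat (bf : seq S -> S -> A None) :
  (forall h s, bf h s \in Av G None s) -> valid_strat G (fun h s => dirac (bf h s)).
Proof. by move=> hb h s; apply: dirac_ldist. Qed.

Lemma exists_valid_opp : exists sO : strat R S A None, valid_strat G sO.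
Proof.
have /choice [f hf] : forall s, exists b, b \in Av G None s by move=> s; exact: exists_av.
by exists (fun h s => dirac (f s)); apply: (dirac_strat (bf := fun _ s => f s)).
Qed.

Lemma reachn_T sg n h s : s \in T -> reachn G T sg n h s = 1.
Proof. by move=> hs; case: n => [|n] /=; rewrite hs. Qed.

Unset Implicit Arguments.
Section PartA.
Local Open Scope classical_set_scope.
Variable sgT : forall q : Pi, strat R S A (Some q).
Hypothesis hsig : forall q, valid_strat G (sgT q).

Definition Uset k h s :=
  [set r | exists sO, valid_strat G sO /\ r = reachn G T (join sgT sO) k h s].
Definition U k h s := inf (Uset k h s).

Lemma Uset_ne k h s : Uset k h s !=set0.
Proof.
by have [sO hO] := exists_valid_opp; exists (reachn G T (join sgT sO) k h s); exists sO.
Qed.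

Lemma Uset_lb k h s : has_lbound (Uset k h s).
Proof.
exists 0 => _ [sO [hO ->]]; apply: reachn_ge0; exact: valid_good.
Qed.

Lemma U_le k h s sO : valid_strat G sO -> U k h s <= reachn G T (join sgT sO) k h s.
Proof. by move=> hO; apply: ge_inf; [exact: Uset_lb | exists sO]. Qed.

Lemma U_ge k h s c : (forall sO, valid_strat G sO -> c <= reachn G T (join sgT sO) k h s) ->
  c <= U k h s.
Proof.
move=> hc; apply: lb_le_inf; first exact: Uset_ne.
by move=> _ [sO [hO ->]]; apply: hc.
Qed.

Lemma U_adh k h s e : 0 < e ->
  exists2 sO, valid_strat G sO & reachn G T (join sgT sO) k h s < U k h s + e.
Proof.
move=> e0; have [r [sO [hO ->]] hr] := inf_adherent e0 (conj (Uset_ne k h s) (Uset_lb k h s)).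
by exists sO.
Qed.

Lemma U_ge0 k h s : 0 <= U k h s.
Proof. by apply: U_ge => sO hO; apply: reachn_ge0; exact: valid_good. Qed.

Lemma U_le1 k h s : U k h s <= 1.
Proof.
have [sO hO] := exists_valid_opp.
apply: le_trans (U_le k h s sO hO) _; apply: reachn_le1; exact: valid_good.
Qed.

Lemma U_mono k h s : U k h s <= U k.+1 h s.
Proof.
apply: U_ge => sO hO; apply: le_trans (U_le k h s sO hO) _.
apply: reachn_mono; exact: valid_good.
Qed.

Lemma U_mono_le k k' h s : (k <= k')%N -> U k h s <= U k' h s.
Proof.
move/subnK <-; elim: (k' - k)%N => [|d IH] //=.
by apply: le_trans IH _; rewrite addSn; apply: U_mono.
Qed.

Lemma U_T k h s : s \in T -> 1 <= U k h s.
Proof. by move=> hs; apply: U_ge => sO _; rewrite reachn_T. Qed.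

Definition Uinf h s := sup (range (fun k => U k h s)).

Lemma has_sup_U h s : has_sup (range (fun k => U k h s)).
Proof.
split; first by exists (U 0 h s); exists 0%N.
by exists 1 => _ [k _ <-]; exact: U_le1.
Qed.

Lemma U_le_Uinf k h s : U k h s <= Uinf h s.
Proof. by apply: ub_le_sup; [case: (has_sup_U h s) | exists k]. Qed.

Lemma Uinf_le1 h s : Uinf h s <= 1.
Proof.
apply: ge_sup; first by case: (has_sup_U h s).
by move=> _ [k _ <-]; exact: U_le1.
Qed.

Lemma Uinf_ge0 h s : 0 <= Uinf h s.
Proof. exact: le_trans (U_ge0 0 h s) (U_le_Uinf 0 h s). Qed.

Lemma Uinf_close h e : 0 < e -> exists K, forall s', Uinf h s' - e <= U K h s'.
Proof.
move=> e0.
have /choice [f hf] : forall s', exists k, Uinf h s' - e < U k h s'.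
  move=> s'; have [_ [k _ <-] hk] := sup_adherent e0 (has_sup_U h s').
  by exists k.
exists (\max_(s' : S) f s')%N => s'.
apply: le_trans (ltW (hf s')) _; apply: U_mono_le.
exact: (leq_bigmax (F := f) s').
Qed.

Definition xs h s : tprof := fun q => sgT q h s.

Lemma xs_valid h s : tvalid s (xs h s).
Proof. by move=> q; exact: hsig. Qed.

Lemma F_le h s b : s \notin T -> b \in Av G None s ->
  (forall b', b' \in Av G None s ->
     E (xs h s) (dirac b) s (Uinf (rcons h s)) <= E (xs h s) (dirac b') s (Uinf (rcons h s))) ->
  E (xs h s) (dirac b) s (Uinf (rcons h s)) <= Uinf h s.
Proof.
move=> hs hb hmin; apply/ler_addgt0Pr => e e0.
have e2 : 0 < e / 2 by rewrite divr_gt0.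
have [K hK] := Uinf_close (rcons h s) (e / 2) e2.
have [sO hO hr] := U_adh K.+1 h s (e / 2) e2.
have hg := valid_good hsig hO.
have h1 : E (xs h s) (sO h s) s (Uinf (rcons h s)) - e / 2 <= reachn G T (join sgT sO) K.+1 h s.
  rewrite reachnS (negbTE hs) -E_shift //; last exact: xs_valid.
  rewrite /E; apply: ler_sum => s' _; rewrite -step_LS.
  rewrite ler_wpM2l //; first by case: (hg h s) => + _; apply.
  apply: le_trans (hK s') _; exact: U_le.
have h2 : E (xs h s) (dirac b) s (Uinf (rcons h s)) <= E (xs h s) (sO h s) s (Uinf (rcons h s)).
  by apply: E_ge_min => //; exact: hO.
have h3 := U_le_Uinf K.+1 h s.
lra.
Qed.

Lemma partA (tt : R) s0 :
  (forall sO, valid_strat G sO -> tt < reach_prob G T (join sgT sO) s0) ->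
  exists n u, tt < u /\ forall sO, valid_strat G sO -> u <= reachn G T (join sgT sO) n [::] s0.
Proof.
move=> hyp.
have /choice [bf hbf] : forall hs : seq S * S, exists b, b \in Av G None hs.2 /\
   forall b', b' \in Av G None hs.2 ->
     E (xs hs.1 hs.2) (dirac b) hs.2 (Uinf (rcons hs.1 hs.2)) <=
     E (xs hs.1 hs.2) (dirac b') hs.2 (Uinf (rcons hs.1 hs.2)).
  move=> [h s] /=.
  have [b hb hm] := argmin_ex (fun b => E (xs h s) (dirac b) s (Uinf (rcons h s))) (exists_av None s).
  by exists b.
pose bstar h s := bf (h, s).
pose sOi := fun (h : seq S) (s : S) => dirac (bstar h s).
have hOi : valid_strat G sOi.
  by apply: (dirac_strat (bf := bstar)) => h s; case: (hbf (h, s)).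
have key : forall m h s, reachn G T (join sgT sOi) m h s <= Uinf h s.
  elim=> [|m IH] h s; case hs: (s \in T).
  - rewrite reachn_T //; exact: le_trans (U_T 0 h s hs) (U_le_Uinf 0 h s).
  - by rewrite reachn0 hs; exact: Uinf_ge0.
  - rewrite reachn_T //; exact: le_trans (U_T 0 h s hs) (U_le_Uinf 0 h s).
  rewrite reachnS hs.
  case: (hbf (h, s)) => /= hb hmin.
  apply: le_trans (F_le h s (bstar h s) (negbT hs) hb hmin).
  rewrite /E; apply: ler_sum => s' _; rewrite step_LS /=.
  apply: ler_wpM2l; last exact: IH.
  by apply: LS_ge0'; [exact: xs_valid | exact: dirac_ldist].
have hlt := hyp sOi hOi.
have hle : reach_prob G T (join sgT sOi) s0 <= Uinf [::] s0.
  by apply: rp_le; [exact: valid_good | move=> n; exact: key].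
have [_ [n _ <-] hn] := sup_gt (has_sup_U [::] s0).1 (lt_le_trans hlt hle).
exists n, (U n [::] s0); split => // sO hO; exact: U_le.
Qed.

End PartA.
Set Implicit Arguments.

Unset Implicit Arguments.
Section PartB.
Local Open Scope classical_set_scope.
Variable sgT : forall q : Pi, strat R S A (Some q).
Hypothesis hsig : forall q, valid_strat G (sgT q).
Variable eta : R.
Hypothesis eta0 : 0 < eta.
Hypothesis eta1 : eta <= 1.

Definition Gset (w : S -> R) s := [set v | exists x, tvalid s x /\
  forall b, b \in Av G None s -> v <= (1 - eta) * E x (dirac b) s w].
Definition Gop w s := sup (Gset w s).

Fixpoint W k s := match k with
  | 0 => (s \in T)%:R
  | k'.+1 => if s \in T then 1 else Gop (W k') s end.

Definition bnd (w : S -> R) := forall s, 0 <= w s <= 1.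

Lemma Gset_0 w s : bnd w -> Gset w s 0.
Proof.
move=> hw; exists (xs sgT [::] s); split; first exact: xs_valid.
move=> b hb; apply: mulr_ge0; first by rewrite subr_ge0.
apply: E_ge; [exact: xs_valid | exact: dirac_ldist | by move=> s'; case/andP: (hw s')].
Qed.

Lemma Gset_ub w s : bnd w -> forall v, Gset w s v -> v <= 1.
Proof.
move=> hw v [x [hx hv]]; have [b hb] := exists_av None s.
apply: le_trans (hv b hb) _.
have h1 : E x (dirac b) s w <= 1.
  by apply: E_le => // [|s']; [exact: dirac_ldist | case/andP: (hw s')].
have h2 : 0 <= E x (dirac b) s w.
  by apply: E_ge => // [|s']; [exact: dirac_ldist | case/andP: (hw s')].
have h3 := mulr_ge0 (ltW eta0) h2.
rewrite mulrBl mul1r; lra.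
Qed.

Lemma has_sup_G w s : bnd w -> has_sup (Gset w s).
Proof.
move=> hw; split; first by exists 0; exact: Gset_0.
by exists 1 => v hv; exact: (Gset_ub w s hw v hv).
Qed.

Lemma Gop_ub w s v : bnd w -> Gset w s v -> v <= Gop w s.
Proof. by move=> hw hv; apply: ub_le_sup => //; case: (has_sup_G w s hw). Qed.

Lemma Gop_ge0 w s : bnd w -> 0 <= Gop w s.
Proof. by move=> hw; apply: Gop_ub => //; exact: Gset_0. Qed.

Lemma Gop_le1 w s : bnd w -> Gop w s <= 1.
Proof.
move=> hw; apply: ge_sup; first by exists 0; exact: Gset_0.
by move=> v hv; exact: (Gset_ub w s hw v hv).
Qed.

Lemma Gop_mono w w' s : bnd w -> bnd w' -> (forall s', w s' <= w' s') -> Gop w s <= Gop w' s.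
Proof.
move=> hw hw' hle; apply: ge_sup; first by exists 0; exact: Gset_0.
move=> v [x [hx hv]]; apply: Gop_ub => //; exists x; split => // b hb.
apply: le_trans (hv b hb) _; apply: ler_wpM2l; first by rewrite subr_ge0.
apply: E_mono => //; exact: dirac_ldist.
Qed.

Lemma W_bnd k : bnd (W k).
Proof.
elim: k => [|k IH] s /=.
  by case: (s \in T); rewrite /= ?lexx ?ler01 ?ler0n.
case: (s \in T); first by rewrite lexx ler01.
apply/andP; split; [exact: (Gop_ge0 _ _ IH) | exact: (Gop_le1 _ _ IH)].
Qed.

Lemma W_mono k s : W k s <= W k.+1 s.
Proof.
elim: k s => [|k IH] s /=.
  by case: (s \in T) => //; exact: (Gop_ge0 (W 0) s (W_bnd 0)).
case: (s \in T) => //; apply: Gop_mono; [exact: W_bnd | exact: (W_bnd k.+1) | exact: IH].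
Qed.

Lemma W_lower n s0 : exists2 sO, valid_strat G sO &
   (1 - eta) ^+ n * reachn G T (join sgT sO) n [::] s0 <= W n s0.
Proof.
have /choice [bf hbf] : forall hs : seq S * S, exists b, b \in Av G None hs.2 /\
   forall b', b' \in Av G None hs.2 ->
     E (xs sgT hs.1 hs.2) (dirac b) hs.2 (W (n - (size hs.1).+1)) <=
     E (xs sgT hs.1 hs.2) (dirac b') hs.2 (W (n - (size hs.1).+1)).
  move=> [h s] /=.
  have [b hb hm] := argmin_ex (fun b => E (xs sgT h s) (dirac b) s (W (n - (size h).+1)))
     (exists_av None s).
  by exists b.
pose sOW := fun (h : seq S) (s : S) => dirac (bf (h, s)).
have hOW : valid_strat G sOW.
  by apply: (dirac_strat (bf := fun h s => bf (h, s))) => h s; case: (hbf (h, s)).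
exists sOW => //.
have e0 : 0 <= 1 - eta by rewrite subr_ge0.
suff key : forall k h s, (size h + k)%N = n ->
   (1 - eta) ^+ k * reachn G T (join sgT sOW) k h s <= W k s.
  by apply: key.
elim=> [|k IH] h s hn; case hs: (s \in T).
- by rewrite reachn_T // expr0 mul1r /= hs.
- by rewrite reachn0 /= hs expr0 mul1r.
- by rewrite reachn_T // mulr1 /= hs; apply: exprn_ile1 => //; rewrite lerBlDr lerDl ltW.
rewrite reachnS hs /= hs.
have hk : (n - (size h).+1)%N = k by rewrite -hn addnS subSS addKn.
case: (hbf (h, s)) => /= hb hmin; rewrite hk in hmin.
apply: le_trans (Gop_ub (W k) s ((1 - eta) * E (xs sgT h s) (dirac (bf (h, s))) s (W k)) (W_bnd k) _); last first.
  exists (xs sgT h s); split; first exact: xs_valid.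
  by move=> b' hb'; apply: (ler_wpM2l e0); exact: hmin.
rewrite exprS -mulrA; apply: (ler_wpM2l e0).
rewrite /E big_distrr; apply: ler_sum => s' _.
apply: (@le_trans _ _ (LS (xs sgT h s) (dirac (bf (h, s))) s s' *
   ((1 - eta) ^+ k * reachn G T (join sgT sOW) k (rcons h s) s'))).
  by rewrite step_LS /= mulrCA.
apply: ler_wpM2l.
  by apply: LS_ge0'; [exact: xs_valid | exact: dirac_ldist].
by apply: IH; rewrite size_rcons addSnnS.
Qed.

Lemma partC n s0 tt : 0 <= tt -> tt < W n s0 ->
  exists sT : forall q : Pi, strat R S A (Some q),
      (forall q, valid_strat G (sT q)) /\ (forall q, memoryless (sT q)) /\
      (forall sO : strat R S A None, valid_strat G sO ->
         tt < reach_prob G T (join sT sO) s0).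
Proof.
move=> t0 hW.
set c := (W n s0 - tt) / 2.
have c0 : 0 < c by rewrite divr_gt0 // subr_gt0.
have d0 : 0 < eta * c by rewrite mulr_gt0.
have e0 : 0 <= 1 - eta by rewrite subr_ge0.
have /choice [pi hpi] : forall s, exists x, tvalid s x /\ (s \notin T ->
    forall b, b \in Av G None s -> Gop (W n) s - eta * c <= (1 - eta) * E x (dirac b) s (W n)).
  move=> s; case hs: (s \in T).
    by exists (xs sgT [::] s); split => //; exact: xs_valid.
  have [v [x [hx hv]] hlt] := sup_adherent d0 (has_sup_G (W n) s (W_bnd n)).
  exists x; split => // _ b hb; exact: le_trans (ltW hlt) (hv b hb).
pose sT' := fun (q : Pi) (h : seq S) (s : S) => pi s q.
have hsT' : forall q, valid_strat G (sT' q) by move=> q h s; exact: ((hpi s).1 q).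
exists sT'; split => //; split; first by move=> q h h' s.
move=> sO hO.
pose w := fun s => W n s - c.
have w1 : forall s, w s <= 1.
  by move=> s; rewrite /w; case/andP: (W_bnd n s) => _ h1; lra.
have hcond : forall s b, s \notin T -> b \in Av G None s ->
    w s <= E (pi s) (dirac b) s (fun s' => (1 - eta) * w s').
  move=> s b hs hb.
  have E1 : E (pi s) (dirac b) s (fun s' => (1 - eta) * w s') =
      (1 - eta) * (E (pi s) (dirac b) s (W n) - c).
    rewrite -E_shift; [|exact: (hpi s).1|exact: dirac_ldist].
    rewrite /E big_distrr /=; by apply: eq_bigr => s' _; rewrite /w mulrCA.
  rewrite E1.
  have h1 := (hpi s).2 hs b hb.
  have h2 := W_mono n s; rewrite /= (negbTE hs) in h2.
  rewrite /w mulrBr; lra.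
have hg := valid_good hsT' hO.
have key : forall k h s, w s <= reachn G T (join sT' sO) k h s + (1 - eta) ^+ k.
  elim=> [|k IH] h s; case hs: (s \in T).
  - by rewrite reachn_T // expr0; have := w1 s; lra.
  - by rewrite reachn0 hs expr0 add0r; exact: w1.
  - rewrite reachn_T //; have := w1 s; have := exprn_ge0 k.+1 e0; lra.
  rewrite reachnS hs.
  have hE : w s <= E (pi s) (sO h s) s (fun s' => (1 - eta) * w s').
    by apply: E_ge_min; [exact: hO | move=> b hb; exact: hcond (negbT hs) hb].
  apply: le_trans hE _.
  have hx : tvalid s (pi s) by exact: (hpi s).1.
  apply: le_trans (_ : E (pi s) (sO h s) s
     (fun s' => reachn G T (join sT' sO) k (rcons h s) s' + (1 - eta) ^+ k.+1) <= _).
    apply: E_mono => // s'.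
    have := IH (rcons h s) s'; have := reachn_ge0 hg k (rcons h s) s'.
    rewrite exprS => r0 hI.
    have := ler_wpM2l e0 hI; rewrite mulrDr; nra.
  rewrite /E; under eq_bigr do rewrite mulrDr.
  rewrite big_split /= -big_distrl /= LS_sum // mul1r.
  by rewrite lerD2r; apply: ler_sum => s' _; rewrite step_LS.
have q01 : 0 <= 1 - eta < 1 by rewrite e0 /= ltrBlDr ltrDl.
have [k hk] := geom_small q01 c0.
have := key k [::] s0; have := reachn_le_rp hg k s0.
rewrite /w /c; move: hk; rewrite /c => hk; lra.
Qed.

End PartB.
Set Implicit Arguments.

End Main.

Theorem theorem1 (R : realType) (Pi S : finType) (A : option Pi -> finType)
  (G : gstruct R S A) (T : {set S}) (s0 : S) (t : rat) :
  wf_gstruct G -> absorbing G T -> 0 <= t <= 1 ->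
  (exists sT : forall q : Pi, strat R S A (Some q),
      (forall q, valid_strat G (sT q)) /\
      (forall sO : strat R S A None, valid_strat G sO ->
         ratr t < reach_prob G T (join sT sO) s0)) ->
  exists sT : forall q : Pi, strat R S A (Some q),
      (forall q, valid_strat G (sT q)) /\ (forall q, memoryless (sT q)) /\
      (forall sO : strat R S A None, valid_strat G sO ->
         ratr t < reach_prob G T (join sT sO) s0).
Proof.
move=> wfG _ /andP[t0 _] [sgT [hsig hyp]].
have tt0 : 0 <= (ratr t : R) by rewrite ler0q.
move: hyp tt0; set tt := (ratr t : R) => hyp tt0.
have [n [u [hu hr]]] := partA R Pi S A G T wfG sgT hsig tt s0 hyp.
have [sO0 hO0] := exists_valid_opp wfG.
have u1 : u <= 1.
  apply: le_trans (hr sO0 hO0) _; apply: reachn_le1; exact: valid_good.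
pose eta := (u - tt) / (2 * (n%:R + 1)).
have np : 0 < 2 * (n%:R + 1) :> R by rewrite mulr_gt0 // ltr_wpDl.
have eta0 : 0 < eta by rewrite divr_gt0 // subr_gt0.
have ee : eta * (2 * (n%:R + 1)) = u - tt by rewrite divfK // lt0r_neq0.
have n0 : 0 <= n%:R :> R by rewrite ler0n.
have eta1 : eta <= 1 by nra.
have [sO hO hlow] := W_lower R Pi S A G T wfG sgT hsig eta eta0 eta1 n s0.
have hb := @bernoulli R (- eta) n (_ : -1 <= - eta).
have hru := hr sO hO.
apply: (partC R Pi S A G T wfG sgT hsig eta eta0 eta1 n s0 tt tt0).
have p0 : 0 <= (1 - eta) ^+ n by apply: exprn_ge0; lra.
have a1 := ler_wpM2l p0 hru.
have a2 : (1 + n%:R * (- eta)) * u <= (1 - eta) ^+ n * u by apply: ler_wpM2r => //; lra.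
have hne : 0 <= n%:R * eta by rewrite mulr_ge0 // ltW.
have h3 : n%:R * eta * u <= n%:R * eta by rewrite ler_piMr.
nra.
Qed.
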